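(* Let $m\ge1$ and $n\ge2$ be integers, and let $p_{m,r}(n)$, $0\le r\le m$, be the unique numbers such that $S(m,n,\alpha)=\sum_{r=0}^m p_{m,r}(n)\cot^r\alpha$ for all real $\alpha\notin\pi\mathbb{Z}$. Then $$p_{2m,0}(n)=S(2m,n,\pi/2),$$ and for $1\le r\le m$, $$p_{m,r}(n)=\frac{1}{r\,(m-1)!}\sum_{k=r}^m n^kA_m^{(k)}T_k^{(r)}.$$
   Context: $S(m,n,\alpha)=\sum_{k=0}^{n-1}\cot^m\frac{\alpha+k\pi}{n}$, which is a polynomial of degree at most $m$ in $\cot\alpha$. The arctangent numbers $A_m^{(k)}$ are defined by $\frac{(\arctan z)^k}{k!}=\sum_{m\ge k}\frac{A_m^{(k)}}{m!}z^m$. The higher-order tangent numbers $T_k^{(r)}$ are defined by $\tan^r z=\sum_{k\ge r}\frac{T_k^{(r)}}{k!}z^k$. *)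

(* Defs.v *)
From Stdlib Require Import Reals Lra Lia List.
From Coquelicot Require Import Coquelicot.
Open Scope R_scope.

Definition cot (x : R) : R := cos x / sin x.

(* finite sum  sum_{k=a}^{b} f k  (empty, i.e. 0, if b < a) *)
Definition Rsum_range (f : nat -> R) (a b : nat) : R :=
  List.fold_right Rplus 0 (List.map f (List.seq a (S b - a))).

Definition Scot (m n : nat) (alpha : R) : R :=
  List.fold_right Rplus 0
    (List.map (fun k => (cot ((alpha + INR k * PI) / INR n)) ^ m) (List.seq 0 n)).

(* Arctangent numbers: (arctan z)^k / k! = sum_{m>=k} A_m^(k) z^m / m!,
   i.e. A_m^(k) is m! times the m-th Taylor coefficient at 0, which is the
   m-th derivative at 0 of (arctan z)^k / k!. *)
Definition arctan_num (m k : nat) : R :=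
  Derive_n (fun z => (atan z) ^ k / INR (Factorial.fact k)) m 0.

(* Higher-order tangent numbers: tan^r z = sum_{k>=r} T_k^(r) z^k / k!. *)
Definition tan_num (k r : nat) : R :=
  Derive_n (fun z => (tan z) ^ r) k 0.

Definition is_cot_coeffs (m n : nat) (p : nat -> R) : Prop :=
  forall alpha : R, (forall z : Z, alpha <> IZR z * PI) ->
    Scot m n alpha = Rsum_range (fun r => p r * (cot alpha) ^ r) 0 m.

(* Main.v *)
Require Import Defs.
From Stdlib Require Import Reals Lra Lia List ZArith.
From Coquelicot Require Import Coquelicot.
Open Scope R_scope.

Definition Pev (c : nat -> R) (M : nat) (z : R) : R :=
  sum_f_R0 (fun j => c j * z ^ j) M.

Definition expand (f : R -> R) (M : nat) (c : nat -> R) : Prop :=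
  exists K d, 0 < d /\ forall z, Rabs z < d ->
    Rabs (f z - Pev c M z) <= K * Rabs z ^ (S M).

Lemma pow_abs_le1 : forall z j, Rabs z <= 1 -> Rabs z ^ j <= 1.
Proof. intros z j H. induction j; simpl. lra.
  assert (0 <= Rabs z) by apply Rabs_pos.
  assert (0 <= Rabs z ^ j) by (apply pow_le; auto). nra. Qed.

Lemma pow_abs_mono : forall z i j, Rabs z <= 1 -> (i <= j)%nat ->
  Rabs z ^ j <= Rabs z ^ i.
Proof. intros z i j H Hij. replace j with (i + (j - i))%nat by lia. rewrite pow_add.
  assert (0 <= Rabs z ^ i) by (apply pow_le, Rabs_pos).
  assert (Rabs z ^ (j-i) <= 1) by (apply pow_abs_le1; auto).
  assert (0 <= Rabs z ^ (j-i)) by (apply pow_le, Rabs_pos). nra. Qed.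

Lemma sum_abs_nonneg : forall (c : nat -> R) M, 0 <= sum_f_R0 (fun j => Rabs (c j)) M.
Proof. intros. apply cond_pos_sum. intros; apply Rabs_pos. Qed.

Lemma Pev_bound : forall c M z, Rabs z <= 1 ->
  Rabs (Pev c M z) <= sum_f_R0 (fun j => Rabs (c j)) M.
Proof. intros. unfold Pev. eapply Rle_trans. apply sum_f_R0_triangle.
  apply sum_Rle. intros j _.
  rewrite Rabs_mult, <- RPow_abs.
  assert (Rabs z ^ j <= 1) by (apply pow_abs_le1; auto).
  assert (0 <= Rabs (c j)) by apply Rabs_pos.
  assert (0 <= Rabs z ^ j) by (apply pow_le, Rabs_pos). nra. Qed.

Lemma Pev_plus a b M z : Pev (fun j => a j + b j) M z = Pev a M z + Pev b M z.
Proof. unfold Pev. rewrite <- plus_sum. apply sum_eq. intros; ring. Qed.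

Lemma Pev_scal k a M z : Pev (fun j => k * a j) M z = k * Pev a M z.
Proof. unfold Pev. rewrite scal_sum. apply sum_eq; intros; ring. Qed.

Lemma Pev_S c M z : Pev c (S M) z = c 0%nat + z * Pev (fun j => c (S j)) M z.
Proof. unfold Pev. rewrite decomp_sum by lia. simpl Init.Nat.pred.
  rewrite scal_sum. f_equal. simpl; ring. apply sum_eq; intros; simpl; ring. Qed.

Lemma Pev_ext c c' M z : (forall j, (j <= M)%nat -> c j = c' j) -> Pev c M z = Pev c' M z.
Proof. intros H. unfold Pev. apply sum_eq. intros. rewrite H; auto. Qed.

Lemma expand_K f M c : expand f M c -> exists K d, 0 <= K /\ 0 < d /\ forall z, Rabs z < d ->
    Rabs (f z - Pev c M z) <= K * Rabs z ^ (S M).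
Proof. intros [K [d [Hd H]]]. exists (Rabs K), d. split; [apply Rabs_pos|split; auto].
  intros z Hz. eapply Rle_trans. apply H; auto. apply Rmult_le_compat_r.
  apply pow_le, Rabs_pos. apply RRle_abs. Qed.

Lemma ex_approx f h M c : expand h M c ->
  (exists K d, 0 < d /\ forall z, Rabs z < d -> Rabs (f z - h z) <= K * Rabs z ^ (S M)) ->
  expand f M c.
Proof. intros Hh [K2 [d2 [Hd2 H2]]]. destruct (expand_K _ _ _ Hh) as [K1 [d1 [HK1 [Hd1 H1]]]].
  exists (K1 + K2), (Rmin d1 d2). split. apply Rmin_pos; auto.
  intros z Hz. pose proof (Rmin_l d1 d2). pose proof (Rmin_r d1 d2).
  replace (f z - Pev c M z) with ((h z - Pev c M z) + (f z - h z)) by ring.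
  eapply Rle_trans. apply Rabs_triang.
  specialize (H1 z ltac:(lra)). specialize (H2 z ltac:(lra)). lra. Qed.

Lemma ex_ext f g M c c' : expand f M c ->
  (exists d, 0 < d /\ forall z, Rabs z < d -> f z = g z) ->
  (forall j, (j <= M)%nat -> c j = c' j) -> expand g M c'.
Proof. intros Hf [d [Hd H]] Hc. destruct Hf as [K [d1 [Hd1 H1]]].
  exists K, (Rmin d d1). split. apply Rmin_pos; auto.
  intros z Hz. pose proof (Rmin_l d d1). pose proof (Rmin_r d d1).
  rewrite <- H by lra. rewrite <- (Pev_ext c c') by auto. apply H1. lra. Qed.

Lemma ex_plus f g M a b : expand f M a -> expand g M b ->
  expand (fun z => f z + g z) M (fun j => a j + b j).
Proof. intros Hf Hg. destruct (expand_K _ _ _ Hf) as [K1 [d1 [HK1 [Hd1 H1]]]].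
  destruct (expand_K _ _ _ Hg) as [K2 [d2 [HK2 [Hd2 H2]]]].
  exists (K1 + K2), (Rmin d1 d2). split. apply Rmin_pos; auto.
  intros z Hz. pose proof (Rmin_l d1 d2). pose proof (Rmin_r d1 d2).
  rewrite Pev_plus.
  replace (f z + g z - (Pev a M z + Pev b M z)) with ((f z - Pev a M z) + (g z - Pev b M z)) by ring.
  eapply Rle_trans. apply Rabs_triang.
  specialize (H1 z ltac:(lra)). specialize (H2 z ltac:(lra)). lra. Qed.

Lemma ex_scal f M a k : expand f M a -> expand (fun z => k * f z) M (fun j => k * a j).
Proof. intros [K [d [Hd H]]]. exists (Rabs k * K), d. split; auto. intros z Hz.
  rewrite Pev_scal. replace (k * f z - k * Pev a M z) with (k * (f z - Pev a M z)) by ring.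
  rewrite Rabs_mult. rewrite Rmult_assoc. apply Rmult_le_compat_l. apply Rabs_pos. auto. Qed.

Lemma ex_const a M : expand (fun _ => a) M (fun j => match j with 0%nat => a | _ => 0 end).
Proof. exists 0, 1. split. lra. intros z Hz.
  assert (Pev (fun j => match j with 0%nat => a | _ => 0 end) M z = a).
  { induction M. unfold Pev; simpl; ring. unfold Pev in *. simpl. rewrite IHM. ring. }
  rewrite H. rewrite Rminus_diag, Rabs_R0. rewrite Rmult_0_l; lra. Qed.

Lemma ex_shift f M c : expand f M c ->
  expand (fun z => z * f z) (S M) (fun j => match j with 0%nat => 0 | S i => c i end).
Proof. intros Hf. destruct (expand_K _ _ _ Hf) as [K [d [HK [Hd H]]]].
  exists K, d. split; auto. intros z Hz. rewrite Pev_S.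
  rewrite (Pev_ext _ c) by auto.
  replace (z * f z - (0 + z * Pev c M z)) with (z * (f z - Pev c M z)) by ring.
  rewrite Rabs_mult. specialize (H z Hz).
  replace (K * Rabs z ^ S (S M)) with (Rabs z * (K * Rabs z ^ S M)) by (simpl; ring).
  apply Rmult_le_compat_l; auto. apply Rabs_pos. Qed.

Lemma Pev_tail c M k z : Rabs z <= 1 ->
  Rabs (Pev c (M + k) z - Pev c M z) <= sum_f_R0 (fun j => Rabs (c j)) (M + k) * Rabs z ^ (S M).
Proof. intros Hz. induction k.
  - rewrite Nat.add_0_r, Rminus_diag, Rabs_R0. apply Rmult_le_pos. apply sum_abs_nonneg.
    apply pow_le, Rabs_pos.
  - rewrite Nat.add_succ_r.
    replace (Pev c (S (M + k)) z) with (Pev c (M + k) z + c (S (M + k)) * z ^ S (M + k)) by reflexivity.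
    replace (Pev c (M + k) z + c (S (M + k)) * z ^ S (M + k) - Pev c M z) with
      ((Pev c (M + k) z - Pev c M z) + c (S (M + k)) * z ^ S (M + k)) by ring.
    eapply Rle_trans. apply Rabs_triang. rewrite Rabs_mult, <- RPow_abs.
    assert (Rabs z ^ S (M + k) <= Rabs z ^ S M) by (apply pow_abs_mono; auto; lia).
    assert (0 <= Rabs (c (S (M + k)))) by apply Rabs_pos.
    replace (sum_f_R0 (fun j => Rabs (c j)) (S (M + k))) with
      (sum_f_R0 (fun j => Rabs (c j)) (M + k) + Rabs (c (S (M + k)))) by reflexivity.
    nra. Qed.

Lemma ex_lower f M k c : expand f (M + k) c -> expand f M c.
Proof. intros Hf. destruct (expand_K _ _ _ Hf) as [K [d [HK [Hd H]]]].
  set (B := sum_f_R0 (fun j => Rabs (c j)) (M + k)).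
  assert (HB : 0 <= B) by apply sum_abs_nonneg.
  exists (K + B), (Rmin d 1). split. apply Rmin_pos; lra.
  intros z Hz. pose proof (Rmin_l d 1). pose proof (Rmin_r d 1).
  replace (f z - Pev c M z) with ((f z - Pev c (M + k) z) + (Pev c (M + k) z - Pev c M z)) by ring.
  eapply Rle_trans. apply Rabs_triang.
  specialize (H z ltac:(lra)). pose proof (Pev_tail c M k z ltac:(lra)). fold B in H2.
  assert (Rabs z ^ S (M + k) <= Rabs z ^ S M) by (apply pow_abs_mono; [lra|lia]). nra. Qed.

Definition conv (a b : nat -> R) (j : nat) : R := sum_f_R0 (fun p => a p * b (j - p)%nat) j.

Lemma Pev_mult a b M : exists B, 0 <= B /\ forall z, Rabs z <= 1 ->
  Rabs (Pev a M z * Pev b M z - Pev (conv a b) M z) <= B * Rabs z ^ (S M).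
Proof.
  destruct M as [|M'].
  - exists 0. split. lra. intros z _. unfold Pev, conv. simpl.
    replace (a 0%nat * 1 * (b 0%nat * 1) - a 0%nat * b 0%nat * 1) with 0 by ring.
    rewrite Rabs_R0. lra.
    set (B := sum_f_R0 (fun k => sum_f_R0 (fun l => Rabs (a (S (l + k))) * Rabs (b (S M' - l)%nat))
               (Init.Nat.pred (S M' - k))) (Init.Nat.pred (S M'))).
    exists B. split.
    { apply cond_pos_sum. intros. apply cond_pos_sum. intros. apply Rmult_le_pos; apply Rabs_pos. }
    intros z Hz. unfold Pev.
    rewrite (cauchy_finite (fun p => a p * z ^ p) (fun q => b q * z ^ q)) by lia.
    replace (sum_f_R0 (fun k => sum_f_R0 (fun p => a p * z ^ p * (b (k - p)%nat * z ^ (k - p))) k) (S M'))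
      with (sum_f_R0 (fun j => conv a b j * z ^ j) (S M')).
    2:{ apply sum_eq. intros k _. unfold conv. rewrite Rmult_comm, scal_sum. apply sum_eq. intros p Hp.
        replace (z ^ k) with (z ^ p * z ^ (k - p)) by (rewrite <- pow_add; f_equal; lia). ring. }
    match goal with |- Rabs (?X + ?T - ?X) <= _ => replace (X + T - X) with T by ring end.
    eapply Rle_trans. apply sum_f_R0_triangle. unfold B. rewrite Rmult_comm, scal_sum.
    apply sum_Rle. intros k Hk. eapply Rle_trans. apply sum_f_R0_triangle. rewrite Rmult_comm, scal_sum.
    apply sum_Rle. intros l Hl.
    rewrite Rabs_mult, Rabs_mult, Rabs_mult, <- !RPow_abs.
    assert (Rabs z ^ S (l + k) * Rabs z ^ (S M' - l) <= Rabs z ^ S (S M')).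
    { rewrite <- pow_add. apply pow_abs_mono; auto. simpl in Hk, Hl. lia. }
    assert (0 <= Rabs (a (S (l + k)))) by apply Rabs_pos.
    assert (0 <= Rabs (b (S M' - l)%nat)) by apply Rabs_pos.
    assert (0 <= Rabs (a (S (l + k))) * Rabs (b (S M' - l)%nat)) by (apply Rmult_le_pos; auto).
    nra.
Qed.

Lemma ex_mult f g M a b : expand f M a -> expand g M b ->
  expand (fun z => f z * g z) M (conv a b).
Proof. intros Hf Hg. destruct (expand_K _ _ _ Hf) as [K1 [d1 [HK1 [Hd1 H1]]]].
  destruct (expand_K _ _ _ Hg) as [K2 [d2 [HK2 [Hd2 H2]]]].
  destruct (Pev_mult a b M) as [B [HB HPm]].
  set (Ba := sum_f_R0 (fun j => Rabs (a j)) M).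
  set (Bb := sum_f_R0 (fun j => Rabs (b j)) M).
  assert (HBa : 0 <= Ba) by apply sum_abs_nonneg.
  assert (HBb : 0 <= Bb) by apply sum_abs_nonneg.
  exists (K1 * (Bb + K2) + Ba * K2 + B), (Rmin (Rmin d1 d2) 1). split.
  { apply Rmin_pos; [apply Rmin_pos|]; lra. }
  intros z Hz. pose proof (Rmin_l (Rmin d1 d2) 1). pose proof (Rmin_r (Rmin d1 d2) 1).
  pose proof (Rmin_l d1 d2). pose proof (Rmin_r d1 d2).
  specialize (H1 z ltac:(lra)). specialize (H2 z ltac:(lra)). specialize (HPm z ltac:(lra)).
  assert (HPa : Rabs (Pev a M z) <= Ba) by (apply Pev_bound; lra).
  assert (HPb : Rabs (Pev b M z) <= Bb) by (apply Pev_bound; lra).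
  assert (Hzp : Rabs z ^ S M <= 1) by (apply pow_abs_le1; lra).
  assert (Hzp0 : 0 <= Rabs z ^ S M) by (apply pow_le, Rabs_pos).
  assert (Hgb : Rabs (g z) <= Bb + K2).
  { replace (g z) with (Pev b M z + (g z - Pev b M z)) by ring.
    eapply Rle_trans. apply Rabs_triang. nra. }
  replace (f z * g z - Pev (conv a b) M z) with
    ((f z - Pev a M z) * g z + Pev a M z * (g z - Pev b M z) +
     (Pev a M z * Pev b M z - Pev (conv a b) M z)) by ring.
  eapply Rle_trans. apply Rabs_triang.
  eapply Rle_trans. apply Rplus_le_compat_r. apply Rabs_triang.
  rewrite !Rabs_mult.
  assert (Rabs (f z - Pev a M z) * Rabs (g z) <= K1 * Rabs z ^ S M * (Bb + K2)).
  { apply Rmult_le_compat; auto; apply Rabs_pos. }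
  assert (Rabs (Pev a M z) * Rabs (g z - Pev b M z) <= Ba * (K2 * Rabs z ^ S M)).
  { apply Rmult_le_compat; auto; apply Rabs_pos. }
  nra. Qed.

Lemma small_const : forall a K d, 0 < d -> (forall z, 0 < z < d -> Rabs a <= K * z) -> a = 0.
Proof. intros a K d Hd H. destruct (Req_dec a 0) as [|Ha]; auto. exfalso.
  assert (Hpa: 0 < Rabs a) by (apply Rabs_pos_lt; auto).
  pose proof (Rabs_pos K) as HK.
  set (w := Rabs a / (2 * (Rabs K + 1))).
  assert (Hw : w * (2 * (Rabs K + 1)) = Rabs a) by (unfold w; field; lra).
  assert (Hw0 : 0 < w) by (unfold w; apply Rdiv_lt_0_compat; lra).
  set (z := Rmin (d/2) w).
  assert (Hz1: z <= d/2) by apply Rmin_l. assert (Hz2: z <= w) by apply Rmin_r.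
  assert (Hz0: 0 < z) by (apply Rmin_pos; lra).
  specialize (H z ltac:(lra)).
  assert (K * z <= Rabs K * z) by (apply Rmult_le_compat_r; [lra| apply RRle_abs]).
  assert (Rabs K * z <= Rabs K * w) by (apply Rmult_le_compat_l; lra).
  nra. Qed.

Lemma poly_small : forall M c, (exists K d, 0 < d /\ forall z, 0 < Rabs z < d ->
   Rabs (Pev c M z) <= K * Rabs z ^ (S M)) -> forall j, (j <= M)%nat -> c j = 0.
Proof. induction M; intros c [K [d [Hd H]]] j Hj.
  - assert (j = 0%nat) by lia. subst. apply (small_const _ K d Hd). intros z Hz.
    assert (Hza : Rabs z = z) by (apply Rabs_pos_eq; lra).
    specialize (H z ltac:(lra)). unfold Pev in H. simpl in H. rewrite Hza in H.
    replace (c 0%nat * 1) with (c 0%nat) in H by ring. replace (z * 1) with z in H by ring. exact H.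
  - set (B := sum_f_R0 (fun j => Rabs (c (S j))) M).
    assert (HB : 0 <= B) by apply sum_abs_nonneg.
    assert (Hc0 : c 0%nat = 0).
    { apply (small_const _ (Rabs K + B) (Rmin d 1)). apply Rmin_pos; lra. intros z Hz.
      pose proof (Rmin_l d 1). pose proof (Rmin_r d 1).
      assert (Hza : Rabs z = z) by (apply Rabs_pos_eq; lra).
      specialize (H z ltac:(lra)). rewrite Pev_S in H.
      assert (HP : Rabs (Pev (fun j => c (S j)) M z) <= B) by (apply Pev_bound; lra).
      replace (c 0%nat) with ((c 0%nat + z * Pev (fun j => c (S j)) M z) + - (z * Pev (fun j => c (S j)) M z)) by ring.
      eapply Rle_trans. apply Rabs_triang. rewrite Rabs_Ropp, Rabs_mult, Hza.
      rewrite Hza in H.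
      assert (z ^ S (S M) <= z).
      { assert (Hp := pow_abs_mono z 1 (S (S M)) ltac:(lra) ltac:(lia)). rewrite Hza in Hp.
        replace (z^1) with z in Hp by ring. exact Hp. }
      assert (K * z ^ S (S M) <= Rabs K * z).
      { eapply Rle_trans. apply Rmult_le_compat_r. apply pow_le; lra. apply RRle_abs.
        apply Rmult_le_compat_l; auto. apply Rabs_pos. }
      nra. }
    destruct j as [|j]; auto.
    apply (IHM (fun j => c (S j))); [|lia].
    exists K, d. split; auto. intros z Hz. specialize (H z Hz). rewrite Pev_S, Hc0 in H.
    rewrite Rplus_0_l, Rabs_mult in H.
    replace (Rabs z ^ S (S M)) with (Rabs z * Rabs z ^ S M) in H by (simpl; ring).
    apply (Rmult_le_reg_l (Rabs z)). lra. nra. Qed.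

Lemma Pev_minus a b M z : Pev (fun j => a j - b j) M z = Pev a M z - Pev b M z.
Proof. unfold Pev. rewrite <- minus_sum. apply sum_eq. intros; ring. Qed.

Lemma ex_uniq f M a b : expand f M a -> expand f M b -> forall j, (j <= M)%nat -> a j = b j.
Proof. intros Ha Hb j Hj.
  destruct (expand_K _ _ _ Ha) as [K1 [d1 [HK1 [Hd1 H1]]]].
  destruct (expand_K _ _ _ Hb) as [K2 [d2 [HK2 [Hd2 H2]]]].
  assert (a j - b j = 0); [|lra].
  apply (poly_small M (fun j => a j - b j)); auto.
  exists (K1 + K2), (Rmin d1 d2). split. apply Rmin_pos; auto. intros z Hz.
  pose proof (Rmin_l d1 d2). pose proof (Rmin_r d1 d2).
  rewrite Pev_minus.
  replace (Pev a M z - Pev b M z) with ((f z - Pev b M z) + - (f z - Pev a M z)) by ring.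
  eapply Rle_trans. apply Rabs_triang. rewrite Rabs_Ropp.
  specialize (H1 z ltac:(lra)). specialize (H2 z ltac:(lra)). lra. Qed.

Lemma ex_sum M N (F : nat -> R -> R) (c : nat -> nat -> R) :
  (forall k, (k <= N)%nat -> expand (F k) M (c k)) ->
  expand (fun z => sum_f_R0 (fun k => F k z) N) M (fun j => sum_f_R0 (fun k => c k j) N).
Proof. induction N; intros H.
  - simpl. apply H; lia.
  - simpl. apply ex_plus. apply IHN. intros; apply H; lia. apply H; lia. Qed.

Lemma ex_comp f g M a : expand f M a ->
  (exists L d, 0 < d /\ forall z, Rabs z < d -> Rabs (g z) <= L * Rabs z) ->
  exists K d, 0 < d /\ forall z, Rabs z < d ->
    Rabs (f (g z) - Pev a M (g z)) <= K * Rabs z ^ (S M).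
Proof. intros Hf [L [d2 [Hd2 H2]]].
  destruct (expand_K _ _ _ Hf) as [K [d1 [HK [Hd1 H1]]]].
  exists (K * Rabs L ^ S M), (Rmin d2 (d1 / (Rabs L + 1))). split.
  { apply Rmin_pos; auto. apply Rdiv_lt_0_compat; auto. pose proof (Rabs_pos L); lra. }
  intros z Hz. pose proof (Rmin_l d2 (d1 / (Rabs L + 1))). pose proof (Rmin_r d2 (d1 / (Rabs L + 1))).
  pose proof (Rabs_pos L). pose proof (Rabs_pos z).
  specialize (H2 z ltac:(lra)).
  assert (HgL : Rabs (g z) <= Rabs L * Rabs z).
  { eapply Rle_trans. apply H2. apply Rmult_le_compat_r; auto. apply RRle_abs. }
  assert (Rabs L * Rabs z < d1).
  { assert (Rabs z * (Rabs L + 1) < d1).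
    { apply (Rmult_lt_reg_r (/ (Rabs L + 1))). apply Rinv_0_lt_compat; lra.
      rewrite Rmult_assoc, Rinv_r by lra. unfold Rdiv in *. lra. }
    nra. }
  eapply Rle_trans. apply H1. lra.
  rewrite Rmult_assoc. apply Rmult_le_compat_l; auto.
  rewrite <- Rpow_mult_distr. apply pow_incr. split; auto. apply Rabs_pos. Qed.

Definition openP (U : R -> Prop) := forall y, U y -> exists e, 0 < e /\ forall z, Rabs (z - y) < e -> U z.

Lemma openP_loc U (P : R -> Prop) y : openP U -> U y -> (forall z, U z -> P z) -> locally y P.
Proof. intros HU Hy HP. destruct (HU y Hy) as [e [He H]].
  exists (mkposreal e He). intros z Hz. apply HP, H. exact Hz. Qed.

Definition Dk (U : R -> Prop) (f : R -> R) (k : nat) :=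
  forall y, U y -> forall j, (j <= k)%nat -> ex_derive_n f j y.
Definition Sm U f := forall k, Dk U f k.

Lemma DnS f j y : Derive_n (Derive f) j y = Derive_n f (S j) y.
Proof. revert y. induction j; intros y. reflexivity.
  simpl. apply Derive_ext. intros t. rewrite IHj. reflexivity. Qed.

Lemma exDS f j y : ex_derive_n f (S j) y -> ex_derive_n (Derive f) j y.
Proof. destruct j. intros; exact I. intros H.
  change (ex_derive (Derive_n (Derive f) j) y). change (ex_derive (Derive_n f (S j)) y) in H.
  eapply ex_derive_ext; [|exact H]. intros t. symmetry. apply DnS. Qed.

Lemma exSD f j y : ex_derive f y -> ex_derive_n (Derive f) j y -> ex_derive_n f (S j) y.
Proof. destruct j. intros H _. exact H. intros _ H.
  change (ex_derive (Derive_n (Derive f) j) y) in H. change (ex_derive (Derive_n f (S j)) y).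
  eapply ex_derive_ext; [|exact H]. intros t. apply DnS. Qed.

Lemma Dk_mono U f k k' : (k' <= k)%nat -> Dk U f k -> Dk U f k'.
Proof. intros Hk H y Hy j Hj. apply H; auto; lia. Qed.

Lemma Dk_D U f k : Dk U f (S k) -> Dk U (Derive f) k.
Proof. intros H y Hy j Hj. apply exDS. apply H; auto; lia. Qed.

Lemma Sm_D U f : Sm U f -> Sm U (Derive f).
Proof. intros H k. apply Dk_D, H. Qed.

Lemma boot U f h k : openP U -> (forall y, U y -> ex_derive f y) ->
  (forall y, U y -> Derive f y = h y) -> Dk U h k -> Dk U f (S k).
Proof. intros HU Hd HD Hh y Hy j Hj. destruct j. exact I.
  apply exSD. auto. destruct j as [|j']. exact I.
  apply ex_derive_n_ext_loc with h.
  apply (openP_loc U); auto. intros z Hz. rewrite HD; auto.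
  apply Hh; auto; lia. Qed.

Lemma boot_D U f h : openP U -> (forall y, U y -> Derive f y = h y) ->
  forall y, U y -> forall j, Derive_n f (S j) y = Derive_n h j y.
Proof. intros HU HD y Hy j. rewrite <- DnS. apply Derive_n_ext_loc.
  apply (openP_loc U); auto. Qed.

Lemma Dk_ext U f g k : (forall t, f t = g t) -> Dk U f k -> Dk U g k.
Proof. intros E H y Hy j Hj. eapply ex_derive_n_ext; [exact E|]. apply H; auto. Qed.

Lemma Dk_plus U f g k : openP U -> Dk U f k -> Dk U g k -> Dk U (fun x => f x + g x) k.
Proof. intros HU Hf Hg y Hy j Hj. apply ex_derive_n_plus.
  apply (openP_loc U); auto. intros z Hz k' Hk'. apply Hf; auto; lia.
  apply (openP_loc U); auto. intros z Hz k' Hk'. apply Hg; auto; lia. Qed.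

Lemma Dk_scal U f a k : Dk U f k -> Dk U (fun x => a * f x) k.
Proof. intros Hf y Hy j Hj. apply ex_derive_n_scal_l. auto. Qed.

Lemma Dk_opp U f k : Dk U f k -> Dk U (fun x => - f x) k.
Proof. intros Hf y Hy j Hj. apply ex_derive_n_opp. auto. Qed.

Lemma Dk_const U a k : Dk U (fun _ => a) k.
Proof. intros y Hy j Hj. apply ex_derive_n_const. Qed.

Lemma Dk_pow U p k : Dk U (fun x => x ^ p) k.
Proof. intros y Hy j Hj. apply ex_derive_n_pow. Qed.

Lemma Dk_mult U k : openP U -> forall f g, Dk U f k -> Dk U g k -> Dk U (fun x => f x * g x) k.
Proof. intros HU. induction k; intros f g Hf Hg.
  - intros y Hy j Hj. assert (j = 0%nat) by lia. subst. exact I.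
  - apply boot with (h := fun x => Derive f x * g x + f x * Derive g x); auto.
    + intros y Hy. apply ex_derive_mult. apply (Hf y Hy 1%nat); lia. apply (Hg y Hy 1%nat); lia.
    + intros y Hy. apply Derive_mult. apply (Hf y Hy 1%nat); lia. apply (Hg y Hy 1%nat); lia.
    + apply Dk_plus; auto. apply IHk. apply Dk_D; auto. apply (Dk_mono _ _ (S k)); auto.
      apply IHk. apply (Dk_mono _ _ (S k)); auto. apply Dk_D; auto. Qed.

Lemma Dk_comp U V g k : openP U -> openP V -> (forall y, U y -> V (g y)) -> Sm U g ->
  forall f, Dk V f k -> Dk U (fun x => f (g x)) k.
Proof. intros HU HV HUV Hg. induction k; intros f Hf.
  - intros y Hy j Hj. assert (j = 0%nat) by lia. subst. exact I.
  - apply boot with (h := fun x => Derive f (g x) * Derive g x); auto.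
    + intros y Hy. apply ex_derive_comp. apply (Hf (g y) (HUV y Hy) 1%nat); lia.
      apply (Hg 1%nat y Hy 1%nat); lia.
    + intros y Hy. rewrite Derive_comp. ring. apply (Hf (g y) (HUV y Hy) 1%nat); lia.
      apply (Hg 1%nat y Hy 1%nat); lia.
    + apply Dk_mult; auto. apply IHk. apply Dk_D; auto. apply Dk_D. apply Hg. Qed.

Lemma Sm_plus U f g : openP U -> Sm U f -> Sm U g -> Sm U (fun x => f x + g x).
Proof. intros HU Hf Hg k. apply Dk_plus; auto. Qed.
Lemma Sm_mult U f g : openP U -> Sm U f -> Sm U g -> Sm U (fun x => f x * g x).
Proof. intros HU Hf Hg k. apply Dk_mult; auto. Qed.
Lemma Sm_scal U f a : Sm U f -> Sm U (fun x => a * f x).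
Proof. intros Hf k. apply Dk_scal; auto. Qed.
Lemma Sm_const U a : Sm U (fun _ => a).
Proof. intros k. apply Dk_const. Qed.
Lemma Sm_comp U V g f : openP U -> openP V -> (forall y, U y -> V (g y)) -> Sm U g ->
  Sm V f -> Sm U (fun x => f (g x)).
Proof. intros. intros k. apply (Dk_comp U V); auto. Qed.
Lemma Sm_ext U f g : (forall t, f t = g t) -> Sm U f -> Sm U g.
Proof. intros E H k. apply (Dk_ext _ f); auto. Qed.
Lemma Sm_powf U f : openP U -> Sm U f -> forall s, Sm U (fun x => f x ^ s).
Proof. intros HU Hf s. induction s. apply (Sm_ext _ (fun _ => 1)). reflexivity. apply Sm_const.
  apply (Sm_mult U f (fun x => f x ^ s)); auto. Qed.

Definition Utrue (y : R) := True.
Lemma openP_true : openP Utrue.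
Proof. intros y _. exists 1. split. lra. intros; exact I. Qed.
Definition Unz (y : R) := y <> 0.
Lemma openP_nz : openP Unz.
Proof. intros y Hy. exists (Rabs y). split. apply Rabs_pos_lt; auto.
  intros z Hz Hz0. unfold Unz in *. subst. rewrite Rminus_0_l, Rabs_Ropp in Hz. lra. Qed.
Definition Uball (c d : R) (y : R) := Rabs (y - c) < d.
Lemma openP_ball c d : openP (Uball c d).
Proof. intros y Hy. unfold Uball in *. exists (d - Rabs (y - c)). split. lra.
  intros z Hz. replace (z - c) with ((z - y) + (y - c)) by ring.
  eapply Rle_lt_trans. apply Rabs_triang. lra. Qed.

Lemma Sm_inv : Sm Unz Rinv.
Proof. intros k. induction k.
  - intros y Hy j Hj. assert (j = 0%nat) by lia. subst. exact I.
  - apply boot with (h := fun x => - (Rinv x * Rinv x)). apply openP_nz.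
    + intros y Hy. eexists. apply (is_derive_inv (fun x => x) y 1).
      auto_derive; auto. exact Hy.
    + intros y Hy. apply is_derive_unique.
      replace (- (/ y * / y)) with (- 1 / y ^ 2) by (field; exact Hy).
      apply (is_derive_inv (fun x => x) y 1). auto_derive; auto. exact Hy.
    + apply Dk_opp. apply Dk_mult. apply openP_nz. auto. auto. Qed.

Lemma Sm_sincos : Sm Utrue sin /\ Sm Utrue cos.
Proof. assert (forall k, Dk Utrue sin k /\ Dk Utrue cos k).
  { induction k.
    - split; intros y Hy j Hj; assert (j = 0%nat) by lia; subst; exact I.
    - destruct IHk as [Hs Hc]. split.
      + apply boot with (h := cos). apply openP_true.
        intros y _. eexists. apply is_derive_sin.
        intros y _. apply is_derive_unique. apply is_derive_sin. auto.
      + apply boot with (h := fun x => - sin x). apply openP_true.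
        intros y _. eexists. apply is_derive_cos.
        intros y _. apply is_derive_unique. apply is_derive_cos. apply Dk_opp; auto. }
  split; intros k; apply H. Qed.

Lemma Sm_sub U V f : (forall y, U y -> V y) -> Sm V f -> Sm U f.
Proof. intros HUV H k y Hy j Hj. apply (H k); auto. Qed.

Lemma Sm_tan : Sm (Uball 0 1) tan.
Proof. destruct Sm_sincos as [Hs Hc].
  apply (Sm_ext _ (fun x => sin x * Rinv (cos x))). intros; reflexivity.
  apply Sm_mult. apply openP_ball. apply (Sm_sub _ Utrue); auto. intros; exact I.
  apply (Sm_comp _ Unz). apply openP_ball. apply openP_nz.
  intros y Hy. unfold Uball, Unz in *. rewrite Rminus_0_r in Hy.
  apply Rgt_not_eq. apply cos_gt_0; pose proof PI2_1; apply Rabs_def2 in Hy; lra.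
  apply (Sm_sub _ Utrue); auto. intros; exact I. apply Sm_inv. Qed.

Lemma Sm_atan : Sm Utrue atan.
Proof. assert (Hh : Sm Utrue (fun y => Rinv (1 + y ^ 2))).
  { apply (Sm_comp _ Unz). apply openP_true. apply openP_nz.
    intros y _. unfold Unz. pose proof (pow2_ge_0 y). lra.
    apply Sm_plus. apply openP_true. apply Sm_const. intros k. apply Dk_pow. apply Sm_inv. }
  intros k. induction k.
  - intros y Hy j Hj. assert (j = 0%nat) by lia. subst. exact I.
  - apply boot with (h := fun y => Rinv (1 + y ^ 2)). apply openP_true.
    intros y _. eexists. apply is_derive_atan.
    intros y _. apply is_derive_unique. replace (/ (1 + y^2)) with (/ (1 + y²)) by (unfold Rsqr; f_equal; ring).
    apply is_derive_atan. apply Hh. Qed.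

Lemma Pev_0 c M : Pev c M 0 = c 0%nat.
Proof. destruct M. unfold Pev; simpl; ring. rewrite Pev_S. ring. Qed.

Lemma taylor f d M : 0 < d -> Sm (Uball 0 d) f ->
  expand f M (fun j => Derive_n f j 0 / INR (Factorial.fact j)).
Proof. intros Hd Hsm.
  set (d' := d / 2).
  assert (Hin : forall t, Rabs t <= d' -> Uball 0 d t).
  { intros t Ht. unfold Uball. rewrite Rminus_0_r. unfold d' in Ht. lra. }
  assert (Hcont : forall c, -d' <= c <= d' -> continuity_pt (fun t => Rabs (Derive_n f (S M) t)) c).
  { intros c Hc. apply (continuity_pt_comp (Derive_n f (S M)) Rabs).
    apply derivable_continuous_pt, ex_derive_Reals_0.
    exact (Hsm (S (S M)) c ltac:(apply Hin; apply Rabs_le; lra) (S (S M)) (le_n _)).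
    apply Rcontinuity_abs. }
  destruct (continuity_ab_maj _ (-d') d' ltac:(unfold d'; lra) Hcont) as [Mx [HMx _]].
  set (Kb := Rabs (Derive_n f (S M) Mx)).
  assert (HKb : 0 <= Kb) by apply Rabs_pos.
  pose proof (INR_fact_lt_0 (S M)) as Hf0.
  exists (Kb / INR (Factorial.fact (S M))), d'. split. unfold d'; lra.
  intros z Hz. destruct (Rtotal_order z 0) as [Hneg|[H0|Hpos]].
  - set (g := fun y => f (- y)).
    assert (Hloc : forall t, Rabs t <= d' -> locally t (fun y => forall k, (k <= S M)%nat -> ex_derive_n f k y)).
    { intros t Ht. apply (openP_loc (Uball 0 d)). apply openP_ball. apply Hin; auto.
      intros y Hy k Hk. apply (Hsm k); auto. }
    destruct (Taylor_Lagrange g M 0 (-z) ltac:(lra)) as [ze [Hze Heq]].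
    { intros t Ht k Hk. apply ex_derive_n_comp_opp.
      eapply filter_imp; [|apply (Hloc (-t))]. intros y Hy k' Hk'. apply Hy. lia.
      rewrite Rabs_Ropp. apply Rabs_le. rewrite Rabs_left in Hz; lra. }
    unfold g at 1 in Heq. rewrite Ropp_involutive in Heq. rewrite Heq.
    assert (HD : forall m, (m <= S M)%nat -> forall t, Rabs t <= d' -> Derive_n g m t = (-1) ^ m * Derive_n f m (- t)).
    { intros m Hm t Ht. unfold g. apply Derive_n_comp_opp.
      eapply filter_imp; [|apply (Hloc (-t))]. intros y Hy k' Hk'. apply Hy. lia.
      rewrite Rabs_Ropp; auto. }
    assert (Hsum : sum_f_R0 (fun m => (- z - 0) ^ m / INR (Factorial.fact m) * Derive_n g m 0) M
                   = Pev (fun j => Derive_n f j 0 / INR (Factorial.fact j)) M z).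
    { unfold Pev. apply sum_eq. intros m Hm. rewrite HD by (try lia; rewrite Rabs_R0; unfold d'; lra).
      rewrite Ropp_0. replace (- z - 0) with (z * -1) by ring. rewrite Rpow_mult_distr.
      assert (E1 : (-1) ^ m * (-1) ^ m = 1).
      { rewrite <- Rpow_mult_distr. replace (-1 * -1) with 1 by ring. apply pow1. }
      unfold Rdiv.
      transitivity (Derive_n f m 0 * / INR (Factorial.fact m) * z ^ m * ((-1) ^ m * (-1) ^ m)).
      ring. rewrite E1. ring. }
    rewrite Hsum.
    match goal with |- Rabs (?P + ?T - ?P) <= _ => replace (P + T - P) with T by ring end.
    rewrite HD by (try lia; rewrite Rabs_pos_eq by lra; rewrite Rabs_left in Hz; lra).
    unfold Rdiv. rewrite !Rabs_mult, pow_1_abs, <- RPow_abs.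
    rewrite (Rabs_pos_eq (/ _)) by (left; apply Rinv_0_lt_compat; auto).
    replace (- z - 0) with (- z) by ring. rewrite Rabs_Ropp.
    assert (Rabs (Derive_n f (S M) (- ze)) <= Kb).
    { apply HMx. rewrite Rabs_left in Hz; lra. }
    assert (0 <= Rabs z ^ S M) by (apply pow_le, Rabs_pos).
    assert (0 < / INR (Factorial.fact (S M))) by (apply Rinv_0_lt_compat; auto).
    assert (0 <= Rabs z ^ S M * / INR (Factorial.fact (S M))) by (apply Rmult_le_pos; lra).
    assert (Rabs z ^ S M * / INR (Factorial.fact (S M)) * Rabs (Derive_n f (S M) (- ze)) <=
            Rabs z ^ S M * / INR (Factorial.fact (S M)) * Kb) by (apply Rmult_le_compat_l; auto).
    nra.
  - subst z. rewrite Pev_0.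
    replace (Derive_n f 0 0 / INR (Factorial.fact 0)) with (f 0) by (simpl; field).
    rewrite Rminus_diag, Rabs_R0. apply Rmult_le_pos. apply Rmult_le_pos; auto.
    left; apply Rinv_0_lt_compat; auto. apply pow_le; first [apply Rabs_pos | lra].
  - destruct (Taylor_Lagrange f M 0 z Hpos) as [ze [Hze Heq]].
    { intros t Ht k Hk. apply (Hsm k); auto. apply Hin. apply Rabs_le. rewrite Rabs_pos_eq in Hz; lra. }
    rewrite Heq.
    assert (Hsum : sum_f_R0 (fun m => (z - 0) ^ m / INR (Factorial.fact m) * Derive_n f m 0) M
                   = Pev (fun j => Derive_n f j 0 / INR (Factorial.fact j)) M z).
    { unfold Pev. apply sum_eq. intros m Hm. rewrite Rminus_0_r. field. apply INR_fact_neq_0. }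
    rewrite Hsum.
    match goal with |- Rabs (?P + ?T - ?P) <= _ => replace (P + T - P) with T by ring end.
    unfold Rdiv. rewrite !Rabs_mult, <- RPow_abs, Rminus_0_r.
    rewrite (Rabs_pos_eq (/ _)) by (left; apply Rinv_0_lt_compat; auto).
    assert (Rabs (Derive_n f (S M) ze) <= Kb).
    { apply HMx. rewrite Rabs_pos_eq in Hz; lra. }
    assert (0 <= Rabs z ^ S M) by (apply pow_le, Rabs_pos).
    assert (0 < / INR (Factorial.fact (S M))) by (apply Rinv_0_lt_compat; auto).
    replace (Kb * / INR (Factorial.fact (S M)) * Rabs z ^ S M) with
      (Rabs z ^ S M * / INR (Factorial.fact (S M)) * Kb) by ring.
    apply Rmult_le_compat_l. apply Rmult_le_pos; lra. auto.
Qed.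

Lemma Pev_zero M z : Pev (fun _ => 0) M z = 0.
Proof. induction M. unfold Pev; simpl; ring. unfold Pev in *; simpl; rewrite IHM; ring. Qed.

Lemma bigO_of f d : 0 < d -> Sm (Uball 0 d) f -> f 0 = 0 ->
  exists L d', 0 <= L /\ 0 < d' /\ forall z, Rabs z < d' -> Rabs (f z) <= L * Rabs z.
Proof. intros Hd Hs H0. destruct (expand_K _ _ _ (taylor f d 0 Hd Hs)) as [K [d' [HK [Hd' H]]]].
  exists K, d'. repeat split; auto. intros z Hz. specialize (H z Hz).
  unfold Pev in H. simpl in H. rewrite H0 in H. replace (f z - 0 / 1 * 1) with (f z) in H by field.
  replace (Rabs z * 1) with (Rabs z) in H by ring. exact H. Qed.

Lemma vanish f d s : 0 < d -> Sm (Uball 0 d) f -> f 0 = 0 ->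
  forall j, (j < s)%nat -> Derive_n (fun z => f z ^ s) j 0 = 0.
Proof. intros Hd Hs H0 j Hj. destruct s as [|s']. lia.
  destruct (bigO_of f d Hd Hs H0) as [L [d' [HL [Hd' HB]]]].
  assert (Hs2 : Sm (Uball 0 d) (fun z => f z ^ S s')) by (apply Sm_powf; auto; apply openP_ball).
  assert (E1 := taylor _ d s' Hd Hs2).
  assert (E2 : expand (fun z => f z ^ S s') s' (fun _ => 0)).
  { exists (L ^ S s'), d'. split; auto. intros z Hz. rewrite Pev_zero, Rminus_0_r.
    rewrite <- RPow_abs, <- Rpow_mult_distr. apply pow_incr. split. apply Rabs_pos. auto. }
  assert (E := ex_uniq _ _ _ _ E1 E2 j ltac:(lia)). simpl in E.
  pose proof (INR_fact_lt_0 j).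
  apply (Rmult_eq_reg_r (/ INR (Factorial.fact j))). rewrite Rmult_0_l. exact E.
  apply Rinv_neq_0_compat. lra. Qed.

Lemma fdb (F G : R -> R) dF dG M : 0 < dF -> 0 < dG -> Sm (Uball 0 dF) F -> Sm (Uball 0 dG) G ->
  G 0 = 0 -> (forall z, Rabs z < dG -> Rabs (G z) < dF) ->
  Derive_n (fun z => F (G z)) M 0 =
  sum_f_R0 (fun k => Derive_n F k 0 *
      Derive_n (fun z => G z ^ k / INR (Factorial.fact k)) M 0) M.
Proof. intros HdF HdG HF HG HG0 Hmap.
  assert (HFG : Sm (Uball 0 dG) (fun z => F (G z))).
  { apply (Sm_comp _ (Uball 0 dF)); auto. apply openP_ball. apply openP_ball.
    intros y Hy. unfold Uball in *. rewrite Rminus_0_r in *. auto. }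
  assert (E1 := taylor _ dG M HdG HFG).
  set (a := fun j => Derive_n F j 0 / INR (Factorial.fact j)).
  assert (EF := taylor F dF M HdF HF). fold a in EF.
  destruct (bigO_of G dG HdG HG HG0) as [L [d' [HL [Hd' HB]]]].
  assert (Hc := ex_comp F G M a EF ltac:(exists L, d'; split; auto)).
  assert (Hk : forall k, Sm (Uball 0 dG) (fun z => G z ^ k / INR (Factorial.fact k))).
  { intros k. apply (Sm_ext _ (fun z => / INR (Factorial.fact k) * G z ^ k)).
    intros; unfold Rdiv; ring. apply Sm_scal. apply Sm_powf; auto. apply openP_ball. }
  assert (E2 : expand (fun z => Pev a M (G z)) M
     (fun j => sum_f_R0 (fun k => Derive_n F k 0 *
        (Derive_n (fun z => G z ^ k / INR (Factorial.fact k)) j 0 / INR (Factorial.fact j))) M)).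
  { eapply ex_ext.
    apply (ex_sum M M (fun k z => Derive_n F k 0 * (G z ^ k / INR (Factorial.fact k)))).
    intros k Hk'. apply ex_scal. apply (taylor _ dG M HdG (Hk k)).
    exists 1. split. lra. intros z _. unfold Pev, a. apply sum_eq. intros; unfold Rdiv; ring.
    intros; reflexivity. }
  assert (E3 : expand (fun z => F (G z)) M
     (fun j => sum_f_R0 (fun k => Derive_n F k 0 *
        (Derive_n (fun z => G z ^ k / INR (Factorial.fact k)) j 0 / INR (Factorial.fact j))) M)).
  { apply (ex_approx _ _ _ _ E2). exact Hc. }
  assert (E := ex_uniq _ _ _ _ E1 E3 M (le_n _)). simpl in E.
  pose proof (INR_fact_lt_0 M).
  apply (Rmult_eq_reg_r (/ INR (Factorial.fact M))). 2: apply Rinv_neq_0_compat; lra.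
  change (Derive_n (fun z => F (G z)) M 0 / INR (Factorial.fact M) = 
    sum_f_R0 (fun k => Derive_n F k 0 * Derive_n (fun z => G z ^ k / INR (Factorial.fact k)) M 0) M
      / INR (Factorial.fact M)).
  rewrite E. unfold Rdiv. rewrite Rmult_comm, scal_sum. apply sum_eq. intros; ring. Qed.

Lemma near_nz f c : ex_derive f c -> f c <> 0 ->
  exists d, 0 < d /\ forall z, Rabs (z - c) < d -> f z <> 0.
Proof. intros Hd Hc. assert (H := derivable_continuous_pt _ _ (ex_derive_Reals_0 _ _ Hd)).
  unfold continuity_pt, continue_in, limit1_in, limit_in in H. simpl in H.
  destruct (H (Rabs (f c)) (Rabs_pos_lt _ Hc)) as [a [Ha Hx]].
  exists a. split; auto. intros z Hz Hfz.
  destruct (Req_dec z c). subst; auto.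
  specialize (Hx z). unfold R_dist, D_x, no_cond in Hx.
  assert (Rabs (f z - f c) < Rabs (f c)) by (apply Hx; split; auto).
  rewrite Hfz, Rminus_0_l, Rabs_Ropp in H1. lra. Qed.

Definition E (t : R) : C := (cos t, sin t).
Fixpoint cpow (x : C) (k : nat) : C :=
  match k with 0%nat => 1%C | S k => (x * cpow x k)%C end.
Fixpoint csum (f : nat -> C) (n : nat) : C :=
  match n with 0%nat => 0%C | S n => (csum f n + f n)%C end.

Lemma E_add a b : E (a + b) = (E a * E b)%C.
Proof. unfold E. apply injective_projections; simpl; [rewrite cos_plus | rewrite sin_plus]; ring. Qed.
Lemma E_0 : E 0 = 1%C.
Proof. unfold E; rewrite cos_0, sin_0; reflexivity. Qed.
Lemma E_pow t k : cpow (E t) k = E (INR k * t).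
Proof. induction k. simpl cpow. replace (INR 0 * t) with 0 by (simpl; ring). symmetry; apply E_0.
  rewrite S_INR. simpl cpow. rewrite IHk, <- E_add. f_equal. ring. Qed.
Lemma E_period x k : E (x + 2 * INR k * PI) = E x.
Proof. unfold E. rewrite cos_period, sin_period. reflexivity. Qed.

Lemma csum_ext f g n : (forall k, (k < n)%nat -> f k = g k) -> csum f n = csum g n.
Proof. induction n; intros H; simpl. reflexivity. rewrite IHn, H; auto. Qed.
Lemma csum_plus f g n : csum (fun k => f k + g k)%C n = (csum f n + csum g n)%C.
Proof. induction n; simpl. ring. rewrite IHn. ring. Qed.
Lemma csum_scal c f n : (c * csum f n)%C = csum (fun k => c * f k)%C n.
Proof. induction n; simpl. ring. rewrite <- IHn. ring. Qed.
Lemma csum_swap (F : nat -> nat -> C) n m :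
  csum (fun k => csum (fun j => F k j) m) n = csum (fun j => csum (fun k => F k j) n) m.
Proof. induction n; simpl.
  - induction m; simpl. reflexivity. rewrite <- IHm. ring.
  - rewrite IHn. rewrite <- csum_plus. reflexivity. Qed.
Lemma csum_const c n : csum (fun _ => c) n = (RtoC (INR n) * c)%C.
Proof. induction n; simpl csum. replace (INR 0) with 0 by reflexivity. ring.
  rewrite IHn, S_INR, RtoC_plus. ring. Qed.
Lemma csum_0 n : csum (fun _ => 0%C) n = 0%C.
Proof. induction n; simpl. reflexivity. rewrite IHn. ring. Qed.
Lemma csum_first f n : csum f (S n) = (f 0%nat + csum (fun k => f (S k)) n)%C.
Proof. induction n; simpl. ring. simpl in IHn. rewrite IHn. ring. Qed.
Lemma geo u n : ((u - 1) * csum (cpow u) n = cpow u n - 1)%C.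
Proof. induction n; simpl. ring.
  replace ((u - 1) * (csum (cpow u) n + cpow u n))%C with ((u - 1) * csum (cpow u) n + (u-1) * cpow u n)%C by ring.
  rewrite IHn. ring. Qed.
Lemma RtoC_sum f N : RtoC (sum_f_R0 f N) = csum (fun k => RtoC (f k)) (S N).
Proof. induction N; simpl. ring. rewrite RtoC_plus, IHN. simpl. reflexivity. Qed.

Lemma E2_neq1 t : sin t <> 0 -> (E (2 * t) - 1)%C <> 0%C.
Proof. intros Hs H. apply (f_equal fst) in H. unfold E in H. simpl in H.
  rewrite cos_2a_sin in H. apply Hs. nra. Qed.

Lemma cot_C t : sin t <> 0 -> RtoC (cot t) = (Ci + 2 * Ci / (E (2 * t) - 1))%C.
Proof. intros Hs. assert (Hn := E2_neq1 t Hs).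
  assert (H : (RtoC (cot t) * (E (2*t) - 1) = Ci * (E (2*t) - 1) + 2 * Ci)%C).
  { unfold E, cot. apply injective_projections; simpl.
    - rewrite cos_2a_sin, sin_2a. field. auto.
    - rewrite cos_2a_cos, sin_2a. field. auto. }
  transitivity ((RtoC (cot t) * (E (2*t) - 1)) / (E (2*t) - 1))%C. field; auto.
  rewrite H. field; auto. Qed.

Lemma cot_sum n b : (1 <= n)%nat -> sin b <> 0 ->
  sum_f_R0 (fun k => cot ((b + INR k * PI) / INR n)) (n - 1) = INR n * cot b.
Proof. intros Hn Hb.
  set (N := INR n). assert (HN : 0 < N) by (apply lt_0_INR; lia).
  set (th := fun k => (b + INR k * PI) / N).
  assert (Hst : forall k, sin (th k) <> 0).
  { intros k H. apply sin_eq_0_0 in H. destruct H as [z Hz]. apply Hb. apply sin_eq_0_1.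
    exists (z * Z.of_nat n - Z.of_nat k)%Z. rewrite minus_IZR, mult_IZR, <- !INR_IZR_INZ.
    fold N. replace b with ((b + INR k * PI) / N * N - INR k * PI) at 1 by (field; lra).
    fold (th k). rewrite Hz. ring. }
  set (Y := E (2 * b)).
  assert (HY : (Y - 1)%C <> 0%C) by (apply E2_neq1; auto).
  assert (Hw : forall k, cpow (E (2 * th k)) n = Y).
  { intros k. rewrite E_pow. replace (INR n * (2 * th k)) with (2 * b + 2 * INR k * PI)
      by (unfold th; fold N; field; lra). apply E_period. }
  assert (Hkey : csum (fun k => (Y - 1) / (E (2 * th k) - 1))%C n = RtoC N).
  { rewrite (csum_ext _ (fun k => csum (fun j => cpow (E (2 * th k)) j) n)).
    2:{ intros k _. rewrite <- (Hw k). rewrite <- (geo (E (2 * th k)) n).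
        change (csum (fun j => cpow (E (2 * th k)) j) n) with (csum (cpow (E (2 * th k))) n). field.
        apply E2_neq1; auto. }
    rewrite csum_swap. destruct n as [|n']. lia. rewrite csum_first.
    simpl cpow at 1. rewrite csum_const.
    rewrite (csum_ext _ (fun _ => 0%C)). rewrite csum_0. fold N. ring.
    intros j Hj.
    set (u := E (2 * (PI * INR (S j) / N))).
    rewrite (csum_ext _ (fun k => E (INR (S j) * 2 * b / N) * cpow u k)%C).
    2:{ intros k _. unfold u. rewrite !E_pow, <- E_add. f_equal. unfold th. field. lra. }
    rewrite <- csum_scal.
    assert (Hu : (u - 1)%C <> 0%C).
    { apply E2_neq1. apply Rgt_not_eq. apply sin_gt_0.
      apply Rmult_lt_0_compat. apply Rmult_lt_0_compat. apply PI_RGT_0. apply lt_0_INR; lia.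
      apply Rinv_0_lt_compat; auto.
      unfold N. apply (Rmult_lt_reg_r (INR (S n'))). apply lt_0_INR; lia.
      unfold Rdiv. rewrite Rmult_assoc, Rinv_l by (apply not_0_INR; lia).
      rewrite Rmult_1_r. apply Rmult_lt_compat_l. apply PI_RGT_0. apply lt_INR. lia. }
    assert (Hs0 : csum (cpow u) (S n') = 0%C).
    { assert (G := geo u (S n')).
      assert (Hun : cpow u (S n') = 1%C).
      { unfold u. rewrite E_pow.
        replace (INR (S n') * (2 * (PI * INR (S j) / N))) with (0 + 2 * INR (S j) * PI)
          by (fold N; field; lra).
        rewrite E_period, E_0. reflexivity. }
      rewrite Hun in G.
      transitivity ((u - 1) * csum (cpow u) (S n') / (u - 1))%C. field; auto.
      rewrite G. field; auto. }
    rewrite Hs0. ring. }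
  assert (H : RtoC (sum_f_R0 (fun k => cot ((b + INR k * PI) / INR n)) (n - 1)) = RtoC (N * cot b)).
  { rewrite RtoC_sum. replace (S (n - 1)) with n by lia.
    rewrite (csum_ext _ (fun k => Ci + (2 * Ci / (Y - 1)) * ((Y - 1) / (E (2 * th k) - 1)))%C).
    2:{ intros k _. rewrite cot_C by (apply (Hst k)). fold N. fold (th k). field. split; auto. apply E2_neq1; auto. }
    rewrite csum_plus, csum_const, <- csum_scal, Hkey.
    rewrite RtoC_mult, (cot_C b Hb). fold Y. fold N. field. auto. }
  apply (f_equal fst) in H. simpl in H. exact H. Qed.

Lemma sin_shift_nz n b k : (1 <= n)%nat -> sin b <> 0 -> sin ((b + INR k * PI) / INR n) <> 0.
Proof. intros Hn Hb H. assert (HN : 0 < INR n) by (apply lt_0_INR; lia).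
  apply sin_eq_0_0 in H. destruct H as [z Hz]. apply Hb. apply sin_eq_0_1.
  exists (z * Z.of_nat n - Z.of_nat k)%Z. rewrite minus_IZR, mult_IZR, <- !INR_IZR_INZ.
  replace b with ((b + INR k * PI) / INR n * INR n - INR k * PI) at 1 by (field; lra).
  rewrite Hz. ring. Qed.

Lemma cot_diff th z : sin th <> 0 -> sin (th - atan z) <> 0 ->
  1 - z * cot th <> 0 /\ cot (th - atan z) = (cot th + z) / (1 - z * cot th).
Proof. intros Hs Hd.
  assert (Hc : 0 < cos (atan z)) by (apply cos_gt_0; pose proof (atan_bound z); lra).
  assert (Hsz : sin (atan z) = z * cos (atan z)).
  { pose proof (tan_atan z) as T. unfold tan in T. rewrite <- T at 2. field. lra. }
  assert (Es : sin (th - atan z) = cos (atan z) * sin th * (1 - z * cot th)).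
  { rewrite sin_minus, Hsz. unfold cot. field. auto. }
  assert (Ec : cos (th - atan z) = cos (atan z) * sin th * (cot th + z)).
  { rewrite cos_minus, Hsz. unfold cot. field. auto. }
  assert (H1 : 1 - z * cot th <> 0).
  { intros H. apply Hd. rewrite Es, H. ring. }
  split; auto. unfold cot at 1. rewrite Es, Ec. field. split; auto. split; auto. lra. Qed.

Lemma cot_sub a p : sin a <> 0 -> cos p <> 0 -> sin (a - p) <> 0 ->
  1 - cot a * tan p <> 0 /\ cot (a - p) = (cot a + tan p) / (1 - cot a * tan p).
Proof. intros Ha Hp Hd.
  assert (Es : sin (a - p) = sin a * cos p * (1 - cot a * tan p)).
  { rewrite sin_minus. unfold cot, tan. field. auto. }
  assert (Ec : cos (a - p) = sin a * cos p * (cot a + tan p)).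
  { rewrite cos_minus. unfold cot, tan. field. auto. }
  assert (H1 : 1 - cot a * tan p <> 0).
  { intros H. apply Hd. rewrite Es, H. ring. }
  split; auto. unfold cot at 1. rewrite Es, Ec. field. auto. Qed.

Lemma main_ident n a z : (1 <= n)%nat -> sin a <> 0 ->
  sin (a - INR n * atan z) <> 0 -> cos (INR n * atan z) <> 0 ->
  (1 + z ^ 2) * sum_f_R0 (fun k => / (1 - z * cot ((a + INR k * PI) / INR n))) (n - 1) =
  INR n + INR n * z * ((cot a + tan (INR n * atan z)) / (1 - cot a * tan (INR n * atan z))).
Proof. intros Hn Ha Hb Hc.
  assert (HN : 0 < INR n) by (apply lt_0_INR; lia).
  set (b := a - INR n * atan z).
  assert (CS := cot_sum n b Hn Hb).
  destruct (cot_sub a (INR n * atan z) Ha Hc Hb) as [_ Eb]. fold b in Eb.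
  rewrite Eb in CS.
  rewrite scal_sum.
  rewrite (sum_eq _ (fun k => 1 + cot ((b + INR k * PI) / INR n) * z)).
  - rewrite plus_sum, sum_cte, <- scal_sum, CS. replace (S (n - 1)) with n by lia. ring.
  - intros k Hk.
    assert (Hth : (b + INR k * PI) / INR n = (a + INR k * PI) / INR n - atan z)
      by (unfold b; field; lra).
    rewrite Hth.
    destruct (cot_diff ((a + INR k * PI) / INR n) z) as [H1 H2].
    apply sin_shift_nz; auto. rewrite <- Hth. apply sin_shift_nz; auto.
    rewrite H2. field. auto. Qed.

Definition sh2 (c : nat -> R) (j : nat) : R := match j with S (S i) => c i | _ => 0 end.
Definition sh1 (c : nat -> R) (j : nat) : R := match j with S i => c i | _ => 0 end.

Lemma ex_1z2 f M c : expand f M c -> expand (fun z => (1 + z ^ 2) * f z) M (fun j => c j + sh2 c j).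
Proof. intros H.
  assert (H2 := ex_shift _ _ _ (ex_shift _ _ _ H)).
  assert (H3 : expand (fun z => z * (z * f z)) (M + 2)
     (fun j => match j with 0%nat => 0 | S i => match i with 0%nat => 0 | S i0 => c i0 end end)).
  { replace (M + 2)%nat with (S (S M)) by lia. exact H2. }
  assert (H4 := ex_lower _ _ _ _ H3).
  eapply ex_ext. apply (ex_plus _ _ _ _ _ H H4).
  exists 1. split. lra. intros; simpl; ring.
  intros j _. destruct j as [|[|j]]; simpl; reflexivity. Qed.

Lemma ex_taylor_D f d M : 0 < d -> Sm (Uball 0 d) f ->
  expand (Derive f) M (fun j => INR (S j) * (Derive_n f (S j) 0 / INR (Factorial.fact (S j)))).
Proof. intros Hd Hf. eapply ex_ext. apply (taylor (Derive f) d M Hd (Sm_D _ _ Hf)).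
  exists 1. split. lra. intros; reflexivity.
  intros j _. cbv beta. rewrite DnS.
  replace (Factorial.fact (S j)) with (S j * Factorial.fact j)%nat by reflexivity.
  rewrite mult_INR. field. split. apply INR_fact_neq_0. apply not_0_INR. lia. Qed.

Definition tau (n : nat) (z : R) := tan (INR n * atan z).
Definition ecoef (n s j : nat) := Derive_n (fun z => tau n z ^ s) j 0 / INR (Factorial.fact j).

Lemma tau_dom n : exists d, 0 < d /\ forall z, Rabs z < d -> Rabs (INR n * atan z) < 1.
Proof.
  destruct (bigO_of atan 1 ltac:(lra) (Sm_sub _ Utrue _ (fun _ _ => I) Sm_atan) atan_0)
    as [L [d' [HL [Hd' H]]]].
  pose proof (pos_INR n) as Hn.
  exists (Rmin d' (1 / (INR n * L + 1))). split.
  { apply Rmin_pos; auto. apply Rdiv_lt_0_compat. lra. nra. }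
  intros z Hz. pose proof (Rmin_l d' (1 / (INR n * L + 1))). pose proof (Rmin_r d' (1 / (INR n * L + 1))).
  specialize (H z ltac:(lra)). rewrite Rabs_mult, (Rabs_pos_eq (INR n)) by lra.
  assert (Rabs z * (INR n * L + 1) < 1).
  { apply (Rmult_lt_reg_r (/ (INR n * L + 1))). apply Rinv_0_lt_compat; nra.
    rewrite Rmult_assoc, Rinv_r by nra. unfold Rdiv in *. lra. }
  pose proof (Rabs_pos z). nra. Qed.

Lemma tau_sm n d : (forall z, Rabs z < d -> Rabs (INR n * atan z) < 1) -> Sm (Uball 0 d) (tau n).
Proof. intros H. apply (Sm_ext _ (fun z => tan (INR n * atan z))). reflexivity.
  apply (Sm_comp _ (Uball 0 1)). apply openP_ball. apply openP_ball.
  intros y Hy. unfold Uball in *. rewrite Rminus_0_r in *. auto.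
  apply (Sm_sub _ Utrue). intros; exact I. apply Sm_scal. apply Sm_atan. apply Sm_tan. Qed.

Lemma tau0 n : tau n 0 = 0.
Proof. unfold tau. rewrite atan_0, Rmult_0_r. apply tan_0. Qed.

Lemma e_vanish n s j : (j < s)%nat -> ecoef n s j = 0.
Proof. intros H. destruct (tau_dom n) as [d [Hd Hdom]].
  unfold ecoef. rewrite (vanish (tau n) d s Hd (tau_sm n d Hdom) (tau0 n) j H). unfold Rdiv; ring. Qed.

Lemma e_zero n j : ecoef n 0 j = match j with 0%nat => 1 | _ => 0 end.
Proof. unfold ecoef. destruct j. simpl. field.
  change (Derive_n (fun _ => 1) (S j) 0 / INR (Factorial.fact (S j)) = 0).
  rewrite Derive_n_const. unfold Rdiv; ring. Qed.

Lemma tau_deriv n r z : (1 <= r)%nat -> cos (INR n * atan z) <> 0 ->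
  (1 + z ^ 2) * Derive (fun z => tau n z ^ r) z =
  INR r * INR n * (tau n z ^ (r - 1) + tau n z ^ (S r)).
Proof. intros Hr Hc.
  assert (D1 : is_derive (fun z => INR n * atan z) z (INR n * / (1 + z ^ 2))).
  { auto_derive. auto. unfold Rsqr. field. pose proof (pow2_ge_0 z). lra. }
  assert (D2 : is_derive (fun z => tau n z) z (INR n * / (1 + z ^ 2) * (tan (INR n * atan z) ^ 2 + 1))).
  { apply (is_derive_comp tan (fun z => INR n * atan z) z). apply is_derive_tan; auto. exact D1. }
  assert (D3 := is_derive_pow _ r z _ D2).
  rewrite (is_derive_unique _ _ _ D3). unfold tau.
  destruct r as [|r']. lia. simpl Init.Nat.pred. replace (S r' - 1)%nat with r' by lia.
  simpl pow. field. pose proof (pow2_ge_0 z). lra. Qed.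

Lemma ode n r i : (1 <= r)%nat ->
  INR (S i) * ecoef n r (S i) + sh2 (fun i => INR (S i) * ecoef n r (S i)) i =
  INR r * INR n * (ecoef n (r - 1) i + ecoef n (S r) i).
Proof. intros Hr. destruct (tau_dom n) as [d [Hd Hdom]].
  assert (Hs := tau_sm n d Hdom).
  assert (Hp : forall s, Sm (Uball 0 d) (fun z => tau n z ^ s)) by (intros; apply Sm_powf; auto; apply openP_ball).
  assert (EL := ex_1z2 _ _ _ (ex_taylor_D _ d i Hd (Hp r))).
  assert (ER := ex_scal _ _ _ (INR r * INR n) (ex_plus _ _ _ _ _ (taylor _ d i Hd (Hp (r-1)%nat)) (taylor _ d i Hd (Hp (S r))))).
  assert (ER' : expand (fun z => (1 + z ^ 2) * Derive (fun z => tau n z ^ r) z) i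
     (fun j => INR r * INR n * (Derive_n (fun z => tau n z ^ (r - 1)) j 0 / INR (Factorial.fact j) +
        Derive_n (fun z => tau n z ^ S r) j 0 / INR (Factorial.fact j)))).
  { eapply ex_ext. exact ER. exists d. split; auto. intros z Hz. symmetry. apply tau_deriv; auto.
    apply Rgt_not_eq. apply cos_gt_0; pose proof PI2_1; specialize (Hdom z Hz); apply Rabs_def2 in Hdom; lra.
    intros; reflexivity. }
  assert (U := ex_uniq _ _ _ _ EL ER' i (le_n _)). unfold ecoef. exact U. Qed.

Lemma geo_R w M : w <> 1 -> sum_f_R0 (fun j => w ^ j) M = (1 - w ^ S M) / (1 - w).
Proof. intros Hw. pose proof (GP_finite w M) as G. replace (M + 1)%nat with (S M) in G by lia.
  apply (Rmult_eq_reg_r (1 - w)). 2: lra. unfold Rdiv. rewrite Rmult_assoc, Rinv_l by lra. lra. Qed.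

Lemma ex_geom t M : expand (fun z => / (1 - z * t)) M (fun j => t ^ j).
Proof. pose proof (Rabs_pos t) as Ht.
  exists (2 * Rabs t ^ S M), (/ (2 * Rabs t + 1)). split. apply Rinv_0_lt_compat; lra.
  intros z Hz. pose proof (Rabs_pos z) as Hz0.
  assert (Hzt : Rabs (z * t) <= 1/2).
  { rewrite Rabs_mult. assert (Rabs z * (2 * Rabs t + 1) < 1).
    { apply (Rmult_lt_reg_r (/ (2 * Rabs t + 1))). apply Rinv_0_lt_compat; lra.
      rewrite Rmult_assoc, Rinv_r by lra. lra. }
    nra. }
  assert (Hw : z * t <> 1) by (intros H; rewrite H, Rabs_R1 in Hzt; lra).
  assert (Hd : 1/2 <= Rabs (1 - z * t)).
  { replace (1 - z * t) with (1 + - (z * t)) by ring. 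
    pose proof (Rabs_triang_inv 1 (z * t)). rewrite Rabs_R1 in H.
    replace (1 - z * t) with (1 + - (z*t)) in H by ring. lra. }
  unfold Pev. rewrite (sum_eq _ (fun j => (z * t) ^ j)) by (intros; rewrite Rpow_mult_distr; ring).
  rewrite geo_R by auto.
  replace (/ (1 - z * t) - (1 - (z * t) ^ S M) / (1 - z * t)) with ((z * t) ^ S M / (1 - z * t))
    by (field; lra).
  unfold Rdiv. rewrite Rabs_mult, Rabs_inv, <- RPow_abs, Rabs_mult, Rpow_mult_distr.
  assert (0 < Rabs (1 - z * t)) by lra.
  assert (/ Rabs (1 - z * t) <= 2).
  { replace 2 with (/ (1/2)) by field. apply Rinv_le_contravar; lra. }
  assert (0 <= Rabs z ^ S M * Rabs t ^ S M) by (apply Rmult_le_pos; apply pow_le; lra).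
  assert (0 < / Rabs (1 - z * t)) by (apply Rinv_0_lt_compat; lra).
  nra. Qed.

Definition wco (n m : nat) (x : R) (i : nat) : R :=
  match i with 0%nat => x | _ => 0 end +
  (1 + x ^ 2) * sum_f_R0 (fun s => x ^ s * ecoef n (S s) i) (m - 1).

Definition Ssum (n : nat) (a : R) (j : nat) : R :=
  sum_f_R0 (fun k => cot ((a + INR k * PI) / INR n) ^ j) (n - 1).

Lemma coeff_ident n m a : (1 <= n)%nat -> (1 <= m)%nat -> sin a <> 0 ->
  forall j, (j <= m)%nat ->
  Ssum n a j + sh2 (Ssum n a) j =
  match j with 0%nat => INR n | _ => 0 end + INR n * sh1 (wco n m (cot a)) j.
Proof. intros Hn Hm Ha j Hj.
  set (x := cot a). set (N := INR n).
  destruct (tau_dom n) as [d1 [Hd1 Hdom]]. assert (Hs := tau_sm n d1 Hdom).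
  destruct (bigO_of (tau n) d1 Hd1 Hs (tau0 n)) as [L [d2 [HL [Hd2 HB]]]].
  destruct (near_nz (fun z => sin (a - N * atan z)) 0) as [d3 [Hd3 Hnz]].
  { auto_derive. auto. }
  { rewrite atan_0, Rmult_0_r, Rminus_0_r. auto. }
  assert (EL := ex_1z2 _ _ _ (ex_sum m (n - 1) (fun k z => / (1 - z * cot ((a + INR k * PI) / INR n)))
       (fun k j => cot ((a + INR k * PI) / INR n) ^ j) (fun k _ => ex_geom _ m))).
  assert (Hp : forall s, Sm (Uball 0 d1) (fun z => tau n z ^ s)) by (intros; apply Sm_powf; auto; apply openP_ball).
  assert (EH : expand (fun z => x + (1 + x ^ 2) * sum_f_R0 (fun s => x ^ s * tau n z ^ S s) (m - 1)) m
                 (wco n m x)).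
  { apply (ex_plus _ _ _ _ _ (ex_const x m)).
    apply ex_scal. apply (ex_sum m (m - 1) (fun s z => x ^ s * tau n z ^ S s) (fun s j => x ^ s * ecoef n (S s) j)).
    intros s _. apply ex_scal. apply (taylor _ d1 m Hd1 (Hp (S s))). }
  assert (EW : expand (fun z => (x + tau n z) / (1 - x * tau n z)) m (wco n m x)).
  { apply (ex_approx _ _ _ _ EH).
    pose proof (Rabs_pos x) as Hx.
    exists (2 * (1 + x ^ 2) * Rabs x ^ m * L ^ S m), (Rmin d2 (/ (2 * Rabs x * L + 1))). split.
    { apply Rmin_pos; auto. apply Rinv_0_lt_compat. nra. }
    intros z Hz. pose proof (Rmin_l d2 (/ (2 * Rabs x * L + 1))). pose proof (Rmin_r d2 (/ (2 * Rabs x * L + 1))).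
    pose proof (Rabs_pos z) as Hz0.
    specialize (HB z ltac:(lra)).
    set (tt := tau n z) in *.
    assert (Hxt : Rabs (x * tt) <= 1/2).
    { rewrite Rabs_mult. assert (Rabs z * (2 * Rabs x * L + 1) < 1).
      { apply (Rmult_lt_reg_r (/ (2 * Rabs x * L + 1))). apply Rinv_0_lt_compat; nra.
        rewrite Rmult_assoc, Rinv_r by nra. lra. }
      assert (Rabs x * Rabs tt <= Rabs x * (L * Rabs z)) by (apply Rmult_le_compat_l; auto). nra. }
    assert (Hw : x * tt <> 1) by (intros Hq; rewrite Hq, Rabs_R1 in Hxt; lra).
    assert (Hd : 1/2 <= Rabs (1 - x * tt)).
    { pose proof (Rabs_triang_inv 1 (x * tt)) as Hq. rewrite Rabs_R1 in Hq. lra. }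
    destruct m as [|m']. lia. replace (S m' - 1)%nat with m' by lia.
    rewrite (sum_eq _ (fun s => (x * tt) ^ s * tt)) by (intros; simpl; rewrite Rpow_mult_distr; ring).
    rewrite <- scal_sum. rewrite geo_R by auto.
    replace ((x + tt) / (1 - x * tt) - (x + (1 + x ^ 2) * (tt * ((1 - (x * tt) ^ S m') / (1 - x * tt)))))
      with ((1 + x ^ 2) * tt * (x * tt) ^ S m' * / (1 - x * tt)) by (field; lra).
    rewrite !Rabs_mult, Rabs_inv, <- RPow_abs, Rabs_mult.
    rewrite (Rabs_pos_eq (1 + x ^ 2)) by (pose proof (pow2_ge_0 x); lra).
    assert (/ Rabs (1 - x * tt) <= 2).
    { replace 2 with (/ (1/2)) by field. apply Rinv_le_contravar; lra. }
    assert (0 < / Rabs (1 - x * tt)) by (apply Rinv_0_lt_compat; lra).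
    assert (Hpw : (Rabs x * Rabs tt) ^ S m' <= (Rabs x * (L * Rabs z)) ^ S m').
    { apply pow_incr. split. apply Rmult_le_pos; apply Rabs_pos. apply Rmult_le_compat_l; auto. }
    rewrite Rpow_mult_distr in Hpw. rewrite Rpow_mult_distr in Hpw. rewrite Rpow_mult_distr in Hpw.
    assert (H1x : 0 <= 1 + x ^ 2) by (pose proof (pow2_ge_0 x); lra).
    assert (A1 : 0 <= Rabs x ^ S m') by (apply pow_le; auto).
    assert (A2 : 0 <= Rabs tt ^ S m') by (apply pow_le, Rabs_pos).
    assert (A3 : 0 <= L ^ S m') by (apply pow_le; auto).
    assert (A4 : 0 <= Rabs z ^ S m') by (apply pow_le; auto).
    assert (A5 : 0 <= Rabs tt) by apply Rabs_pos.
    replace (Rabs z ^ S (S m')) with (Rabs z * Rabs z ^ S m') by (simpl; ring).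
    replace (L ^ S (S m')) with (L * L ^ S m') by (simpl; ring).
    assert (B1 : Rabs tt * (Rabs x ^ S m' * Rabs tt ^ S m') <= (L * Rabs z) * (Rabs x ^ S m' * (L ^ S m' * Rabs z ^ S m'))).
    { apply Rmult_le_compat; auto. apply Rmult_le_pos; auto. }
    assert (B2 : 0 <= Rabs tt * (Rabs x ^ S m' * Rabs tt ^ S m')) by (apply Rmult_le_pos; auto; apply Rmult_le_pos; auto).
    assert (B3 : (1 + x ^ 2) * (Rabs tt * (Rabs x ^ S m' * Rabs tt ^ S m')) * / Rabs (1 - x * tt) <=
                 (1 + x ^ 2) * (Rabs tt * (Rabs x ^ S m' * Rabs tt ^ S m')) * 2).
    { apply Rmult_le_compat_l; auto. apply Rmult_le_pos; auto. }
    assert (B4 : (1 + x ^ 2) * (Rabs tt * (Rabs x ^ S m' * Rabs tt ^ S m')) <=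
                 (1 + x ^ 2) * ((L * Rabs z) * (Rabs x ^ S m' * (L ^ S m' * Rabs z ^ S m')))).
    { apply Rmult_le_compat_l; auto. }
    rewrite Rpow_mult_distr. nra. }
  assert (ENW : expand (fun z => N * (z * ((x + tau n z) / (1 - x * tau n z)))) m (fun j => N * sh1 (wco n m x) j)).
  { apply ex_scal. apply (ex_lower _ m 1). replace (m + 1)%nat with (S m) by lia.
    eapply ex_ext. apply (ex_shift _ _ _ EW). exists 1. split; [lra|]. intros; reflexivity.
    intros j0 _. destruct j0; reflexivity. }
  assert (ER := ex_plus _ _ _ _ _ (ex_const N m) ENW).
  assert (ER' : expand (fun z => (1 + z ^ 2) * sum_f_R0 (fun k => / (1 - z * cot ((a + INR k * PI) / INR n))) (n - 1)) m
     (fun j => match j with 0%nat => N | _ => 0 end + N * sh1 (wco n m x) j)).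
  { eapply ex_ext. exact ER. exists (Rmin d1 d3). split. apply Rmin_pos; auto.
    intros z Hz. pose proof (Rmin_l d1 d3). pose proof (Rmin_r d1 d3).
    rewrite main_ident; auto.
    - unfold tau, x, N. ring.
    - apply Hnz. rewrite Rminus_0_r. lra.
    - apply Rgt_not_eq. apply cos_gt_0; pose proof PI2_1; specialize (Hdom z ltac:(lra)); apply Rabs_def2 in Hdom; lra.
    - intros; reflexivity. }
  exact (ex_uniq _ _ _ _ EL ER' j Hj). Qed.

Fixpoint cc (n : nat) (i : nat) : R :=
  match i with
  | 0%nat => INR n
  | S i' => match i' with
            | 0%nat => INR n * ecoef n 1 0
            | S i'' => INR n * ecoef n 1 (S i'') - cc n i''
            end
  end.

Definition qq (n j r : nat) : R :=
  match r with 0%nat => cc n j | _ => INR j / INR r * ecoef n r j end.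

Definition QQ (n m : nat) (x : R) (j : nat) : R := sum_f_R0 (fun r => qq n j r * x ^ r) m.

Lemma sum_zero N : sum_f_R0 (fun _ => 0) N = 0.
Proof. rewrite sum_cte. ring. Qed.

Lemma claimA n m x : (1 <= m)%nat -> forall j, (j <= m)%nat ->
  QQ n m x j + sh2 (QQ n m x) j =
  match j with 0%nat => INR n | _ => 0 end + INR n * sh1 (wco n m x) j.
Proof. intros Hm j Hj. destruct m as [|m']. lia.
  destruct j as [|i].
  - simpl sh2. simpl sh1. unfold QQ. rewrite decomp_sum by lia. simpl Init.Nat.pred.
    rewrite (sum_eq _ (fun _ => 0)). rewrite sum_zero. simpl. ring.
    intros r _. unfold qq. simpl INR at 1. unfold Rdiv. ring.
  - set (e := ecoef n).
    assert (Hsh : sh2 (QQ n (S m') x) (S i) = sum_f_R0 (fun r => match i with 0%nat => 0 | S i' => qq n i' r end * x ^ r) (S m')).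
    { destruct i.
      - simpl sh2. rewrite (sum_eq _ (fun _ => 0)) by (intros; ring). symmetry; apply sum_zero.
      - reflexivity. }
    rewrite Hsh. unfold QQ. rewrite <- plus_sum.
    rewrite decomp_sum by lia. simpl Init.Nat.pred.
    assert (H0 : qq n (S i) 0 * x ^ 0 + match i with 0%nat => 0 | S i' => qq n i' 0 end * x ^ 0 = INR n * e 1%nat i).
    { unfold e, qq. destruct i; simpl; ring. }
    rewrite H0.
    rewrite (sum_eq _ (fun r' => INR n * (e r' i + e (S (S r')) i) * x ^ S r')).
    2:{ intros r' Hr'. pose proof (ode n (S r') i ltac:(lia)) as O.
        replace (S r' - 1)%nat with r' in O by lia. fold e in O.
        assert (Hr : INR (S r') <> 0) by (apply not_0_INR; lia).
        unfold qq. destruct i as [|i'].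
        - simpl sh2 in O. apply (Rmult_eq_reg_l (INR (S r'))); auto.
          replace (INR (S r') * (INR 1 / INR (S r') * ecoef n (S r') 1 * x ^ S r' + 0 * x ^ S r'))
             with (INR 1 * ecoef n (S r') 1 * x ^ S r') by (field; auto).
          fold e. replace (INR 1 * e (S r') 1%nat) with (INR 1 * e (S r') 1%nat + 0) by ring.
          rewrite O. ring.
        - assert (O' : INR (S (S i')) * e (S r') (S (S i')) + INR i' * e (S r') i' =
                       INR (S r') * INR n * (e r' (S i') + e (S (S r')) (S i'))).
          { rewrite <- O. destruct i' as [|i'']. simpl. ring. reflexivity. }
          apply (Rmult_eq_reg_l (INR (S r'))); auto. fold e.
          replace (INR (S r') * (INR (S (S i')) / INR (S r') * e (S r') (S (S i')) * x ^ S r' +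
                    INR i' / INR (S r') * e (S r') i' * x ^ S r'))
            with ((INR (S (S i')) * e (S r') (S (S i')) + INR i' * e (S r') i') * x ^ S r') by (field; auto).
          rewrite O'. ring. }
    simpl sh1. unfold wco. replace (S m' - 1)%nat with m' by lia. fold e.
    set (A := sum_f_R0 (fun s => x ^ s * e (S s) i) m').
    assert (C1 : e 1%nat i + sum_f_R0 (fun r' => e (S (S r')) i * x ^ S r') m' = A).
    { assert (Hv : e (S (S m')) i = 0) by (apply e_vanish; lia).
      transitivity (sum_f_R0 (fun s => x ^ s * e (S s) i) (S m')).
      rewrite (decomp_sum (fun s => x ^ s * e (S s) i) (S m')) by lia. simpl Init.Nat.pred.
      simpl pow at 2. f_equal. ring.
      apply sum_eq. intros; ring.
      simpl sum_f_R0 at 1. fold A. rewrite Hv. ring. }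
    assert (C2 : sum_f_R0 (fun r' => e r' i * x ^ S r') m' = match i with 0%nat => x | _ => 0 end + x ^ 2 * A).
    { assert (Hv : e (S m') i = 0) by (apply e_vanish; lia).
      transitivity (sum_f_R0 (fun r' => e r' i * x ^ S r') (S m')).
      replace (sum_f_R0 (fun r' => e r' i * x ^ S r') (S m')) with
        (sum_f_R0 (fun r' => e r' i * x ^ S r') m' + e (S m') i * x ^ S (S m')) by reflexivity.
      rewrite Hv. ring.
      rewrite (decomp_sum (fun r' => e r' i * x ^ S r') (S m')) by lia. simpl Init.Nat.pred.
      unfold A. rewrite scal_sum.
      f_equal. unfold e. rewrite e_zero. destruct i; simpl; ring.
      apply sum_eq. intros; simpl; ring. }
    rewrite (sum_eq _ (fun r' => (e r' i * x ^ S r') * INR n + (e (S (S r')) i * x ^ S r') * INR n)) by (intros; ring).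
    rewrite plus_sum, <- !scal_sum.
    rewrite C2, <- C1. ring.
Qed.

Lemma claimB n m a : (1 <= n)%nat -> (1 <= m)%nat -> sin a <> 0 ->
  forall j, (j <= m)%nat -> Ssum n a j = QQ n m (cot a) j.
Proof. intros Hn Hm Ha.
  assert (K : forall k j, (j <= k)%nat -> (j <= m)%nat -> Ssum n a j = QQ n m (cot a) j).
  { induction k; intros j Hjk Hjm.
    - assert (j = 0%nat) by lia. subst j.
      pose proof (coeff_ident n m a Hn Hm Ha 0 Hjm) as E1.
      pose proof (claimA n m (cot a) Hm 0 Hjm) as E2. simpl sh2 in E1, E2. lra.
    - destruct (Nat.le_gt_cases j k) as [Hle|Hgt]. apply IHk; auto.
      assert (j = S k) by lia. subst j.
      pose proof (coeff_ident n m a Hn Hm Ha (S k) Hjm) as E1.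
      pose proof (claimA n m (cot a) Hm (S k) Hjm) as E2.
      assert (Hs : sh2 (Ssum n a) (S k) = sh2 (QQ n m (cot a)) (S k)).
      { destruct k as [|i]. reflexivity. simpl. apply IHk; lia. }
      lra. }
  intros j Hj. apply (K j); auto. Qed.

Lemma fold_sum (f : nat -> R) a L :
  fold_right Rplus 0 (map f (seq a (S L))) = sum_f_R0 (fun i => f (a + i)%nat) L.
Proof. revert a. induction L; intros a.
  - simpl. rewrite Nat.add_0_r. ring.
  - change (fold_right Rplus 0 (map f (seq a (S (S L))))) with
      (f a + fold_right Rplus 0 (map f (seq (S a) (S L)))).
    rewrite IHL.
    rewrite (decomp_sum (fun i => f (a + i)%nat) (S L)) by lia. simpl Init.Nat.pred.
    rewrite Nat.add_0_r. f_equal. apply sum_eq. intros; f_equal; lia. Qed.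

Lemma Rsum0 f m : Rsum_range f 0 m = sum_f_R0 f m.
Proof. unfold Rsum_range. rewrite Nat.sub_0_r. rewrite fold_sum. apply sum_eq. intros; reflexivity. Qed.

Lemma Rsum_r f r m : (r <= m)%nat -> Rsum_range f r m = sum_f_R0 (fun i => f (r + i)%nat) (m - r).
Proof. intros H. unfold Rsum_range. replace (S m - r)%nat with (S (m - r)) by lia. apply fold_sum. Qed.

Lemma Scot_eq m n a : (1 <= n)%nat -> Scot m n a = Ssum n a m.
Proof. intros Hn. unfold Scot, Ssum. replace n with (S (n - 1)) at 1 by lia.
  rewrite fold_sum. apply sum_eq. intros; reflexivity. Qed.

Lemma poly_uniq (p q : nat -> R) m : (forall x, sum_f_R0 (fun r => p r * x ^ r) m = sum_f_R0 (fun r => q r * x ^ r) m) ->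
  forall r, (r <= m)%nat -> p r = q r.
Proof. intros H r Hr. assert (p r - q r = 0); [|lra].
  apply (poly_small m (fun r => p r - q r)); auto.
  exists 0, 1. split. lra. intros z _. rewrite Pev_minus. unfold Pev. rewrite H.
  rewrite Rminus_diag, Rabs_R0. lra. Qed.

Lemma cot_surj x : sin (PI / 2 - atan x) <> 0 /\ cot (PI / 2 - atan x) = x /\
  (forall z : Z, PI / 2 - atan x <> IZR z * PI).
Proof. assert (Hc : 0 < cos (atan x)) by (apply cos_gt_0; pose proof (atan_bound x); lra).
  assert (Hs : sin (PI / 2 - atan x) <> 0) by (rewrite sin_shift; lra).
  split; auto. split.
  - unfold cot. rewrite sin_shift, cos_shift. rewrite <- (tan_atan x) at 3. reflexivity.
  - intros z Hz. apply Hs. apply sin_eq_0_1. exists z. auto. Qed.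

Theorem corollary6p7 (m n : nat) (p q : nat -> R) :
  (1 <= m)%nat -> (2 <= n)%nat ->
  is_cot_coeffs m n p ->
  is_cot_coeffs (2 * m) n q ->
  q 0%nat = Scot (2 * m) n (PI / 2) /\
  (forall r : nat, (1 <= r <= m)%nat ->
     p r = / (INR r * INR (Factorial.fact (m - 1))) *
           Rsum_range (fun k => (INR n) ^ k * arctan_num m k * tan_num k r) r m).
Proof. intros Hm Hn Hp Hq. split.
  - rewrite (Hq (PI / 2)).
    + rewrite Rsum0. unfold cot. rewrite cos_PI2, sin_PI2. replace (0 / 1) with 0 by field.
      rewrite decomp_sum by lia. simpl pow at 1. rewrite (sum_eq _ (fun _ => 0)).
      rewrite sum_zero. ring. intros i _. simpl. ring.
    + intros z Hz. assert (sin (PI / 2) = 0) by (apply sin_eq_0_1; exists z; auto).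
      rewrite sin_PI2 in H. lra.
  - intros r [Hr1 Hrm].
    assert (Hpq : forall k, (k <= m)%nat -> p k = qq n m k).
    { apply poly_uniq. intros x. destruct (cot_surj x) as [Hs [Hcx Hz]].
      specialize (Hp _ Hz). rewrite Rsum0, Hcx in Hp. rewrite <- Hp.
      rewrite Scot_eq by lia. rewrite (claimB n m) by (auto; lia). rewrite Hcx. reflexivity. }
    rewrite Hpq by lia. unfold qq. destruct r as [|r']. lia.
    unfold ecoef.
    destruct (tau_dom n) as [d1 [Hd1 Hdom]].
    assert (HF : Sm (Uball 0 1) (fun y => tan y ^ S r')) by (apply Sm_powf; [apply openP_ball|apply Sm_tan]).
    assert (HG : Sm (Uball 0 d1) (fun z => INR n * atan z)).
    { apply (Sm_sub _ Utrue). intros; exact I. apply Sm_scal. apply Sm_atan. }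
    assert (FD := fdb (fun y => tan y ^ S r') (fun z => INR n * atan z) 1 d1 m ltac:(lra) Hd1 HF HG
                   ltac:(cbv beta; rewrite atan_0; ring) Hdom).
    change (fun z => (fun y => tan y ^ S r') ((fun z0 => INR n * atan z0) z)) with (fun z => tau n z ^ S r') in FD.
    rewrite FD.
    assert (Hsum : sum_f_R0 (fun k => Derive_n (fun y => tan y ^ S r') k 0 *
       Derive_n (fun z => (INR n * atan z) ^ k / INR (Factorial.fact k)) m 0) m =
       Rsum_range (fun k => INR n ^ k * arctan_num m k * tan_num k (S r')) (S r') m).
    { rewrite Rsum_r by lia.
      rewrite (sum_eq _ (fun k => INR n ^ k * arctan_num m k * tan_num k (S r'))).
      2:{ intros k _. unfold arctan_num, tan_num.
          rewrite (Derive_n_ext (fun z => (INR n * atan z) ^ k / INR (Factorial.fact k))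
                     (fun z => INR n ^ k * (atan z ^ k / INR (Factorial.fact k)))).
          rewrite Derive_n_scal_l. ring.
          intros t. rewrite Rpow_mult_distr. unfold Rdiv. ring. }
      rewrite (tech2 _ r' m) by lia.
      rewrite (sum_eq (fun k => INR n ^ k * arctan_num m k * tan_num k (S r')) (fun _ => 0)).
      rewrite sum_zero, Rplus_0_l. reflexivity.
      intros k Hk. unfold tan_num.
      rewrite (vanish tan 1 (S r') ltac:(lra) Sm_tan tan_0 k) by lia. ring. }
    rewrite Hsum.
    replace (Factorial.fact m) with (m * Factorial.fact (m - 1))%nat
      by (destruct m; [lia|simpl; rewrite Nat.sub_0_r; reflexivity]).
    rewrite mult_INR. field. split. apply INR_fact_neq_0. split; apply not_0_INR; lia.
Qed.
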